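(* Let $a,b,c\in\mathbb{R}$ be such that $$B=\begin{pmatrix}1&a&b\\ a&1&c\\ b&c&1\end{pmatrix}$$ is positive semidefinite. Put $$c_-=ab-\sqrt{(1-a^2)(1-b^2)},\qquad c_+=ab+\sqrt{(1-a^2)(1-b^2)},$$ $$\Delta_{a,b}=\max\{\sqrt{1-c_-^2},\sqrt{1-c_+^2}\},\qquad \delta_{a,b}=\min\{\sqrt{1-c_-^2},\sqrt{1-c_+^2}\}.$$ (i) If $f$ is a function on $[c_-,c_+]$ with $\delta_{a,b}\le f(x)$ for all $x\in[c_-,c_+]$, then $|a^2-b^2|\le\Delta_{a,b}f(x)$ for all $x\in[c_-,c_+]$. In particular, $|a^2-b^2|\le\Delta_{a,b}\sqrt{1-c^2}$. (ii) If $g$ is a function on $[c_-,c_+]$ with $\sqrt{1-c_+}\le g(x)$ for all $x\in[c_-,c_+]$, then $|a-b|\le\sqrt{1-c_-}\,g(x)$ for all $x\in[c_-,c_+]$. In particular, $|a-b|\le\sqrt{1-c_-}\,\sqrt{1-c}$. (iii) If moreover $a,b,c\in[0,1]$, then $|a-b|\le\sqrt{1-c^2}$. *)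

(* Defs.v *)
From Stdlib Require Import Reals.
Open Scope R_scope.

Definition Bmat (a b c : R) (i j : nat) : R :=
  match i, j with
  | 0, 1 | 1, 0 => a
  | 0, 2 | 2, 0 => b
  | 1, 2 | 2, 1 => c
  | _, _ => 1
  end.

Definition psd3 (a b c : R) : Prop :=
  forall v : nat -> R,
    0 <= sum_f_R0 (fun i => sum_f_R0 (fun j => v i * Bmat a b c i j * v j) 2) 2.

Definition c_minus (a b : R) : R := a * b - sqrt ((1 - a ^ 2) * (1 - b ^ 2)).
Definition c_plus (a b : R) : R := a * b + sqrt ((1 - a ^ 2) * (1 - b ^ 2)).

Definition Delta_ab (a b : R) : R :=
  Rmax (sqrt (1 - c_minus a b ^ 2)) (sqrt (1 - c_plus a b ^ 2)).
Definition delta_ab (a b : R) : R :=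
  Rmin (sqrt (1 - c_minus a b ^ 2)) (sqrt (1 - c_plus a b ^ 2)).

(* Main.v *)
Require Import Defs.
From Stdlib Require Import Reals Lra Psatz.
Open Scope R_scope.

Lemma quad (a b c : R) : psd3 a b c -> forall x y z,
  0 <= x*x + y*y + z*z + 2*a*x*y + 2*b*x*z + 2*c*y*z.
Proof.
  intros H x y z.
  specialize (H (fun i => match i with 0%nat => x | 1%nat => y | _ => z end)).
  simpl in H. nra.
Qed.

Lemma sqrt_sq_abs (u : R) : sqrt (u ^ 2) = Rabs u.
Proof. rewrite <- sqrt_Rsqr_abs. f_equal. unfold Rsqr. ring. Qed.

Theorem theorem2 (a b c : R) (HB : psd3 a b c) :
  (* (i) *)
  (forall f : R -> R,
     (forall x, c_minus a b <= x <= c_plus a b -> delta_ab a b <= f x) ->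
     forall x, c_minus a b <= x <= c_plus a b ->
       Rabs (a ^ 2 - b ^ 2) <= Delta_ab a b * f x) /\
  Rabs (a ^ 2 - b ^ 2) <= Delta_ab a b * sqrt (1 - c ^ 2) /\
  (* (ii) *)
  (forall g : R -> R,
     (forall x, c_minus a b <= x <= c_plus a b -> sqrt (1 - c_plus a b) <= g x) ->
     forall x, c_minus a b <= x <= c_plus a b ->
       Rabs (a - b) <= sqrt (1 - c_minus a b) * g x) /\
  Rabs (a - b) <= sqrt (1 - c_minus a b) * sqrt (1 - c) /\
  (* (iii) *)
  (0 <= a <= 1 -> 0 <= b <= 1 -> 0 <= c <= 1 -> Rabs (a - b) <= sqrt (1 - c ^ 2)).
Proof.
  pose proof (quad a b c HB) as Q.
  assert (Ha : a^2 <= 1) by (specialize (Q 1 (-a) 0); nra).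
  assert (Hb : b^2 <= 1) by (specialize (Q 1 0 (-b)); nra).
  assert (Hc : c^2 <= 1) by (specialize (Q 0 1 (-c)); nra).
  set (d := 1 + 2*a*b*c - a^2 - b^2 - c^2).
  assert (Hd : 0 <= d).
  { specialize (Q (a*c-b) (a*b-c) (1-a^2-d)).
    assert (E : (a*c-b)*(a*c-b) + (a*b-c)*(a*b-c) + (1-a^2-d)*(1-a^2-d)
      + 2*a*(a*c-b)*(a*b-c) + 2*b*(a*c-b)*(1-a^2-d) + 2*c*(a*b-c)*(1-a^2-d)
      = d*(1-a^2) - d*d) by (unfold d; ring).
    rewrite E in Q. nra. }
  set (p := 1 - a^2). set (q := 1 - b^2).
  assert (Hp : 0 <= p) by (unfold p; lra).
  assert (Hq : 0 <= q) by (unfold q; lra).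
  set (sa := sqrt p). set (sb := sqrt q).
  assert (Hsa : 0 <= sa) by apply sqrt_pos.
  assert (Hsb : 0 <= sb) by apply sqrt_pos.
  assert (Hsa2 : sa*sa = p) by (apply sqrt_sqrt; auto).
  assert (Hsb2 : sb*sb = q) by (apply sqrt_sqrt; auto).
  assert (HS : sqrt ((1 - a^2) * (1 - b^2)) = sa*sb) by (apply sqrt_mult; auto).
  assert (Ecm : c_minus a b = a*b - sa*sb) by (unfold c_minus; rewrite HS; ring).
  assert (Ecp : c_plus a b = a*b + sa*sb) by (unfold c_plus; rewrite HS; ring).
  assert (HS2 : (sa*sb)*(sa*sb) = p*q) by (rewrite <- Hsa2, <- Hsb2; ring).
  assert (Hcab : (c - a*b)^2 <= p*q) by (unfold p, q, d in *; nra).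
  assert (Ht : 0 <= sa*sb) by (apply Rmult_le_pos; auto).
  assert (Hct : Rabs (c - a*b) <= sa*sb).
  { rewrite <- sqrt_sq_abs, <- HS. apply sqrt_le_1_alt. exact Hcab. }
  assert (Hcp : c <= c_plus a b) by (rewrite Ecp; revert Hct; unfold Rabs; destruct Rcase_abs; lra).
  assert (Hcm : c_minus a b <= c) by (rewrite Ecm; revert Hct; unfold Rabs; destruct Rcase_abs; lra).
  assert (Hab1 : a*b <= 1) by nra.
  assert (Hab2 : -1 <= a*b) by nra.
  assert (Ecp1 : 0 <= 1 - c_plus a b).
  { rewrite Ecp. assert (sa*sb <= 1-a*b); [|lra].
    rewrite <- (Rabs_pos_eq (1-a*b)) by lra. rewrite <- sqrt_sq_abs, <- HS. apply sqrt_le_1_alt.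
    assert ((1-a*b)^2 - p*q = (a-b)^2) by (unfold p,q; ring). pose proof (pow2_ge_0 (a-b)). lra. }
  assert (Ecm1 : 0 <= 1 - c_minus a b).
  { rewrite Ecm. lra. }
  assert (E1 : 1 - c_minus a b ^ 2 = (a*sb + b*sa)^2).
  { rewrite Ecm. replace ((a*sb+b*sa)^2) with (a*a*(sb*sb) + b*b*(sa*sa) + 2*a*b*(sa*sb)) by ring.
    rewrite Hsa2, Hsb2. replace ((a*b - sa*sb)^2) with (a*a*b*b - 2*a*b*(sa*sb) + (sa*sb)*(sa*sb)) by ring.
    rewrite HS2. unfold p, q. ring. }
  assert (E2 : 1 - c_plus a b ^ 2 = (a*sb - b*sa)^2).
  { rewrite Ecp. replace ((a*sb-b*sa)^2) with (a*a*(sb*sb) + b*b*(sa*sa) - 2*a*b*(sa*sb)) by ring.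
    rewrite Hsa2, Hsb2. replace ((a*b + sa*sb)^2) with (a*a*b*b + 2*a*b*(sa*sb) + (sa*sb)*(sa*sb)) by ring.
    rewrite HS2. unfold p, q. ring. }
  assert (Eprod : Rabs (a^2 - b^2) = Rabs (a*sb + b*sa) * Rabs (a*sb - b*sa)).
  { rewrite <- Rabs_mult. f_equal.
    replace ((a*sb + b*sa)*(a*sb-b*sa)) with (a*a*(sb*sb) - b*b*(sa*sa)) by ring.
    rewrite Hsa2, Hsb2. unfold p, q. ring. }
  assert (EDd : Delta_ab a b * delta_ab a b = Rabs (a^2 - b^2)).
  { unfold Delta_ab, delta_ab. rewrite E1, E2, !sqrt_sq_abs, Eprod.
    unfold Rmax, Rmin. destruct Rle_dec; lra. }
  assert (HD0 : 0 <= Delta_ab a b).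
  { unfold Delta_ab. apply Rle_trans with (sqrt (1 - c_minus a b ^ 2)); [apply sqrt_pos|apply Rmax_l]. }
  assert (Edm : Rabs (a - b) = sqrt (1 - c_minus a b) * sqrt (1 - c_plus a b)).
  { rewrite <- sqrt_mult by auto. rewrite <- sqrt_sq_abs. f_equal.
    rewrite Ecm, Ecp. replace ((1 - (a*b - sa*sb))*(1 - (a*b+sa*sb))) with
      ((1-a*b)*(1-a*b) - (sa*sb)*(sa*sb)) by ring. rewrite HS2. unfold p, q. ring. }
  assert (Hdc : delta_ab a b <= sqrt (1 - c^2)).
  { unfold delta_ab. destruct (Rle_dec 0 c).
    - apply Rle_trans with (sqrt (1 - c_plus a b ^ 2)); [apply Rmin_r|].
      apply sqrt_le_1_alt. nra.
    - apply Rle_trans with (sqrt (1 - c_minus a b ^ 2)); [apply Rmin_l|].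
      apply sqrt_le_1_alt. nra. }
  split; [|split; [|split; [|split]]].
  - intros f Hf x Hx. rewrite <- EDd. apply Rmult_le_compat_l; auto.
  - rewrite <- EDd. apply Rmult_le_compat_l; auto.
  - intros g Hg x Hx. rewrite Edm. apply Rmult_le_compat_l; [apply sqrt_pos|auto].
  - rewrite Edm. apply Rmult_le_compat_l; [apply sqrt_pos|]. apply sqrt_le_1_alt. lra.
  - intros [Ha0 Ha1] [Hb0 Hb1] [Hc0 Hc1].
    rewrite <- sqrt_sq_abs. apply sqrt_le_1_alt. unfold d in Hd. assert (0 <= a*b*(1-c)) by (apply Rmult_le_pos; [apply Rmult_le_pos|]; lra). nra.
Qed.
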